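(* Let $G$ be a connected weighted multigraph on the vertex set $V$, $|V|\ge2$, with positive edge weights, and let $\tilde G$ be any balance-graph of $G$. Then for all $i,j\in V$ the resistance distance between $i$ and $j$ in $G$ equals the long walk distance $d^{LW}(i,j)$ computed in $\tilde G$.
   Context: Loops and multiple edges are allowed. The weighted adjacency matrix $A(H)=(a_{ij})$ of a graph $H$ has $a_{ij}$ equal to the sum of weights of the edges joining $i$ and $j$; its Laplacian is $L(H)=\operatorname{diag}(A(H)\mathbf 1)-A(H)$. The resistance distance in $G$ is $d^r(i,j)=(e_i-e_j)^{\mathsf T}L(G)^{+}(e_i-e_j)$, where $L^+$ is the Moore–Penrose inverse and $e_i$ the standard basis vectors (equivalently, the effective resistance when each edge is a resistor of conductance equal to its weight). A balance-graph of $G$ is a graph $\tilde G$ with the same vertices, containing the edges of $G$ with the same weights, whose additional edges are all loops with positive weights, and whose weighted adjacency matrix has constant row sums. For a connected graph $H$ on $n$ vertices with adjacency matrix $B$ and spectral radius $\rho$, the long walk distance is $d^{LW}(i,j)=\lim_{\alpha\to\infty}\theta\bigl(\tfrac12(\ln r_{ii}+\ln r_{jj})-\ln r_{ij}\bigr)$, where $(r_{ij})=(I-tB)^{-1}$, $t=(\rho+\alpha^{-1})^{-1}$, and $\theta=\ln(e+\alpha^{2/n})\frac{\alpha-1}{\ln\alpha}$. *)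

(* Defs.v *)
From HB Require Import structures.
From Stdlib Require Import ClassicalEpsilon.
From mathcomp Require Import all_boot all_order all_algebra.
From mathcomp Require Import all_classical all_reals all_analysis.
Set Implicit Arguments. Unset Strict Implicit. Unset Printing Implicit Defensive.
Import Order.TTheory GRing.Theory Num.Theory.
Local Open Scope ring_scope.
Import numFieldNormedType.Exports.
Local Open Scope classical_set_scope.

(* A weighted multigraph (loops and multiple edges allowed) on the vertex
   set 'I_n is a finite list of edges (i, j, w): an edge joining i and j with
   weight w. *)
Definition edge (R : realType) (n : nat) := ('I_n * 'I_n * R)%type.

Definition pos_weights (R : realType) n (E : seq (edge R n)) : Prop :=
  forall e, e \in E -> 0 < e.2.

Definition joins (R : realType) n (e : edge R n) (i j : 'I_n) : bool :=
  ((e.1.1 == i) && (e.1.2 == j)) || ((e.1.1 == j) && (e.1.2 == i)).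

Definition adjmx (R : realType) n (E : seq (edge R n)) : 'M[R]_n :=
  \matrix_(i, j) \sum_(e <- E | joins e i j) e.2.

Definition laplacian (R : realType) n (A : 'M[R]_n) : 'M[R]_n :=
  diag_mx (\row_i \sum_k A i k) - A.

Definition connected_graph (R : realType) n (E : seq (edge R n)) : Prop :=
  forall i j : 'I_n, connect [rel x y | has (fun e => joins e x y) E] i j.

Definition is_balance_graph (R : realType) n (E Et : seq (edge R n)) : Prop :=
  exists loops : seq ('I_n * R),
    [/\ forall l, l \in loops -> 0 < l.2,
        Et = E ++ [seq (l.1, l.1, l.2) | l <- loops] &
        exists c : R, forall i : 'I_n, \sum_j adjmx Et i j = c].

(* Moore--Penrose inverse: the (unique) matrix satisfying the four Penrose
   equations (real case, so conjugate transpose = transpose). *)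
Definition is_MP_inverse (R : realType) n (A X : 'M[R]_n) : Prop :=
  [/\ A *m X *m A = A, X *m A *m X = X,
      (A *m X)^T = A *m X & (X *m A)^T = X *m A].

Definition MPinv (R : realType) n (A : 'M[R]_n) : 'M[R]_n :=
  epsilon (inhabits (0 : 'M[R]_n)) (is_MP_inverse A).

Definition basis_vec (R : realType) n (i : 'I_n) : 'cV[R]_n := delta_mx i 0.

Definition resistance_dist (R : realType) n (E : seq (edge R n)) (i j : 'I_n) : R :=
  let u := basis_vec R i - basis_vec R j in
  ((u^T *m MPinv (laplacian (adjmx E)) *m u) 0 0).

(* spectral radius of a (symmetric) real matrix: the largest modulus of an
   eigenvalue (all eigenvalues of a real symmetric matrix are real) *)
Definition spectral_radius (R : realType) n (B : 'M[R]_n) : R :=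
  sup [set `|a| | a in [set a : R | eigenvalue B a]].

Definition long_walk_expr (R : realType) n (B : 'M[R]_n) (i j : 'I_n)
  (alpha : R) : R :=
  let t := (spectral_radius B + alpha^-1)^-1 in
  let r := invmx (1%:M - t *: B) in
  let theta := ln (expR 1 + alpha `^ (2 / n%:R)) * ((alpha - 1) / ln alpha) in
  theta * (2^-1 * (ln (r i i) + ln (r j j)) - ln (r i j)).

Definition long_walk_dist_is (R : realType) n (E : seq (edge R n)) (i j : 'I_n)
  (d : R) : Prop :=
  (long_walk_expr (adjmx E) i j : R -> R) @ +oo%R --> d.

(* Main.v *)
Require Import Defs.
From HB Require Import structures.
From Stdlib Require Import ClassicalEpsilon.
From mathcomp Require Import all_boot all_order all_algebra.
From mathcomp Require Import all_classical all_reals all_analysis.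
From mathcomp Require Import ring lra.
Set Implicit Arguments. Unset Strict Implicit. Unset Printing Implicit Defensive.
Import Order.TTheory GRing.Theory Num.Theory.
Local Open Scope ring_scope.
Import numFieldNormedType.Exports.
Local Open Scope classical_set_scope.

Lemma exists_max (R : realType) n (f : 'I_n -> R) (i0 : 'I_n) :
  exists k, forall j, f j <= f k.
Proof.
case: (@arg_maxP _ _ _ i0 xpredT f) => // k _ H.
by exists k => j; apply: H.
Qed.

Lemma adj_sym (R : realType) n (E : seq (edge R n)) i j :
  adjmx E i j = adjmx E j i.
Proof. by rewrite !mxE; apply: eq_bigl => e; rewrite /joins orbC. Qed.

Lemma adj_ge0 (R : realType) n (E : seq (edge R n)) i j :
  pos_weights E -> 0 <= adjmx E i j.
Proof.
move=> pw; rewrite mxE big_seq_cond; apply: sumr_ge0 => e /andP[eE _].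
exact: ltW (pw e eE).
Qed.

Lemma adj_cat (R : realType) n (E1 E2 : seq (edge R n)) :
  adjmx (E1 ++ E2) = adjmx E1 + adjmx E2.
Proof. by apply/matrixP => i j; rewrite !mxE big_cat. Qed.

Lemma adj_loops (R : realType) n (l : seq ('I_n * R)) i j :
  i != j -> adjmx [seq (x.1, x.1, x.2) | x <- l] i j = 0.
Proof.
move=> ij; rewrite mxE big_map big1 // => x.
rewrite /joins /=; case/orP => /andP[/eqP a /eqP b]; move: ij;
  by rewrite -a -b eqxx.
Qed.

Lemma lap_diag (R : realType) n (A D : 'M[R]_n) :
  (forall i j, i != j -> D i j = 0) -> laplacian (A + D) = laplacian A.
Proof.
move=> HD; apply/matrixP => i j; rewrite !mxE.
have rs : \sum_k (A + D) i k = \sum_k A i k + D i i.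
  rewrite (eq_bigr (fun k => A i k + D i k)); last by move=> k _; rewrite mxE.
  rewrite big_split /=; congr (_ + _).
  rewrite (bigD1 i) //= big1 ?addr0 // => k ki; apply: HD; by rewrite eq_sym.
rewrite rs; case: (eqVneq i j) => [<-|ij]; last by rewrite !mulr0n HD // addr0.
by rewrite /= !mulr1n opprD addrACA addrN addr0.
Qed.

Lemma sum_pos_has (R : realType) (T : eqType) (s : seq T) (P : pred T) (f : T -> R) :
  (forall e, e \in s -> 0 < f e) -> has P s -> 0 < \sum_(e <- s | P e) f e.
Proof.
elim: s => [|x s IH] //= Hpos /orP Hh.
rewrite big_cons.
have Hrest : 0 <= \sum_(e <- s | P e) f e.
  rewrite big_seq_cond; apply: sumr_ge0 => e /andP[es _].
  by apply: ltW; apply: Hpos; rewrite inE es orbT.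
case: ifP => Px.
  by apply: ltr_pwDl => //; apply: Hpos; rewrite inE eqxx.
case: Hh => [Px'|Hs]; first by rewrite Px' in Px.
by apply: IH => // e es; apply: Hpos; rewrite inE es orbT.
Qed.

Lemma lap_row (R : realType) n (a : 'M[R]_n) (v : 'rV[R]_n) k :
  (forall i j, a i j = a j i) ->
  (v *m laplacian a) 0 k = \sum_j a k j * (v 0 k - v 0 j).
Proof.
move=> sym; rewrite /laplacian mulmxBr mxE mul_mx_diag !mxE.
rewrite [RHS](eq_bigr (fun j => v 0 k * a k j - v 0 j * a j k)); last first.
  by move=> j _; rewrite mulrBr (sym j k) mulrC [a k j * _]mulrC.
by rewrite sumrB -big_distrr.
Qed.

Lemma lap_ker (R : realType) n (E : seq (edge R n)) (v : 'rV[R]_n) :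
  pos_weights E -> connected_graph E ->
  v *m laplacian (adjmx E) = 0 -> forall i j, v 0 i = v 0 j.
Proof.
move=> pw conn H0 i0 j0.
have [k Hk] := exists_max (fun l => v 0 l) i0.
have step : forall x y, v 0 x = v 0 k -> has (fun e => joins e x y) E -> v 0 y = v 0 k.
  move=> x y Hx Hh.
  have := lap_row v x (@adj_sym R n E); rewrite H0 mxE => /esym/eqP.
  rewrite psumr_eq0 => [/allP Hall|j _]; last first.
    by apply: mulr_ge0; [exact: adj_ge0 | rewrite subr_ge0 Hx Hk].
  have /Hall := mem_index_enum y; rewrite implyTb mulf_eq0 => /orP[|].
    have : 0 < adjmx E x y.
      by rewrite mxE; apply: sum_pos_has => // e eE; apply: pw.
    by move=> /gt_eqF ->.
  by rewrite subr_eq0 Hx => /eqP <-.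
have all_k : forall i, v 0 i = v 0 k.
  move=> i; have /connectP [p Hp ->] := conn k i.
  have : v 0 k = v 0 k by [].
  move: Hp; move: {1 3 4}k.
  elim: p => [|y p IH] x //= /andP[Hxy Hp] Hx.
  apply: IH => //; symmetry; apply: (step x) => //; by symmetry.
by rewrite !all_k.
Qed.

Definition Jm (R : realType) n : 'M[R]_n := (n%:R)^-1 *: const_mx 1.

Lemma Jm_sym (R : realType) n : (Jm R n)^T = Jm R n.
Proof. by apply/matrixP => i j; rewrite !mxE. Qed.

Lemma JJ (R : realType) n : (0 < n)%N -> Jm R n *m Jm R n = Jm R n.
Proof.
move=> n0; apply/matrixP => i j; rewrite !mxE.
rewrite (eq_bigr (fun _ => n%:R^-1 * n%:R^-1)); last by move=> k _; rewrite !mxE !mulr1.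
rewrite sumr_const card_ord -(mulr_natr (n%:R^-1 / n%:R)) -mulrA mulVf ?mulr1 //.
by rewrite pnatr_eq0 -lt0n.
Qed.

Lemma LJ0 (R : realType) n (L : 'M[R]_n) :
  (forall i, \sum_j L i j = 0) -> L *m Jm R n = 0.
Proof.
move=> rs; apply/matrixP => i j; rewrite !mxE.
rewrite (eq_bigr (fun k => L i k * n%:R^-1)); last by move=> k _; rewrite !mxE mulr1.
by rewrite -big_distrl /= rs mul0r.
Qed.

Lemma JL0 (R : realType) n (L : 'M[R]_n) :
  L^T = L -> (forall i, \sum_j L i j = 0) -> Jm R n *m L = 0.
Proof.
move=> sym rs; apply: trmx_inj; rewrite trmx_mul sym Jm_sym LJ0 //.
by rewrite trmx0.
Qed.

Lemma unit_LJ (R : realType) n (L : 'M[R]_n) :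
  (0 < n)%N -> L^T = L -> (forall i, \sum_j L i j = 0) ->
  (forall v : 'rV[R]_n, v *m L = 0 -> forall i j, v 0 i = v 0 j) ->
  L + Jm R n \in unitmx.
Proof.
move=> n0 sym rs ker; rewrite -row_free_unit; apply: inj_row_free => v Hv.
pose one : 'cV[R]_n := const_mx 1.
have L1 : L *m one = 0.
  by apply/matrixP => i j; rewrite !mxE -[RHS](rs i); apply: eq_bigr => k _; rewrite mxE mulr1.
have J1 : Jm R n *m one = one.
  apply/matrixP => i j; rewrite !mxE.
  rewrite (eq_bigr (fun _ => n%:R^-1)); last by move=> k _; rewrite !mxE !mulr1.
  by rewrite sumr_const card_ord -(mulr_natr n%:R^-1) mulVf // pnatr_eq0 -lt0n.
have v1 : v *m one = 0.
  by have := congr1 (mulmx^~ one) Hv; rewrite mul0mx -mulmxA mulmxDl L1 J1 add0r.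
have vJ : v *m Jm R n = 0.
  apply/matrixP => i j; rewrite !mxE.
  have sv : \sum_k v 0 k = 0.
    transitivity ((v *m one) 0 0); last by rewrite v1 mxE.
    by rewrite mxE; apply: eq_bigr => k _; rewrite mxE mulr1.
  rewrite (eq_bigr (fun k => v 0 k * n%:R^-1)); last by move=> k _; rewrite !mxE mulr1 (ord1 i).
  by rewrite -big_distrl /= sv mul0r.
have vL : v *m L = 0 by move: Hv; rewrite mulmxDr vJ addr0.
have Hc := ker v vL.
pose i0 : 'I_n := Ordinal n0.
have s0 : v 0 i0 *+ n = 0.
  have := congr1 (fun M : 'cV_1 => M 0 0) v1; rewrite !mxE.
  rewrite (eq_bigr (fun _ => v 0 i0)); last by move=> k _; rewrite mxE mulr1 (Hc k i0).
  by rewrite sumr_const card_ord.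
apply/matrixP => i j; rewrite (ord1 i) mxE (Hc j i0).
by move/eqP: s0; rewrite mulrn_eq0 -[n == 0%N]negbK -lt0n n0 /= => /eqP.
Qed.

Definition X0 (R : realType) n (L : 'M[R]_n) := invmx (L + Jm R n) - Jm R n.

Section MP.
Lemma X0_facts (R : realType) n (L : 'M[R]_n) :
  (0 < n)%N -> L^T = L -> (forall i, \sum_j L i j = 0) ->
  L + Jm R n \in unitmx ->
  [/\ L *m X0 L = 1%:M - Jm R n, X0 L *m L = 1%:M - Jm R n,
      Jm R n *m X0 L = 0, X0 L *m Jm R n = 0 & (X0 L)^T = X0 L].
Proof.
move=> n0 sym rs U.
have hLJ := LJ0 rs; have hJL := JL0 sym rs; have hJJ := JJ R n0.
set J := Jm R n in hLJ hJL hJJ U *; set Y := invmx (L + J).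
have JY : J *m Y = J.
  by rewrite -{1}hJJ -[J *m J]add0r -hJL -mulmxDr -mulmxA mulmxV // mulmx1.
have YJ : Y *m J = J.
  by rewrite -{1}hJJ -[J *m J]add0r -hLJ -mulmxDl mulmxA mulVmx // mul1mx.
have LY : L *m Y = 1%:M - J.
  by rewrite -JY -(mulmxV U) mulmxDl addrK.
have YL : Y *m L = 1%:M - J.
  by rewrite -YJ -(mulVmx U) mulmxDr addrK.
rewrite /X0 -/J -/Y; split.
- by rewrite mulmxBr LY hLJ subr0.
- by rewrite mulmxBl YL hJL subr0.
- by rewrite mulmxBr JY hJJ subrr.
- by rewrite mulmxBl YJ hJJ subrr.
- by rewrite linearB /= Jm_sym /Y trmx_inv linearD /= sym Jm_sym.
Qed.
End MP.

Lemma X0_MP (R : realType) n (L : 'M[R]_n) :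
  (0 < n)%N -> L^T = L -> (forall i, \sum_j L i j = 0) ->
  L + Jm R n \in unitmx -> is_MP_inverse L (X0 L).
Proof.
move=> n0 sym rs U; have [h1 h2 h3 h4 h5] := X0_facts n0 sym rs U.
split.
- by rewrite h1 mulmxBl mul1mx JL0 // subr0.
- by rewrite h2 mulmxBl mul1mx h3 subr0.
- by rewrite h1 linearB /= trmx1 Jm_sym.
- by rewrite h2 linearB /= trmx1 Jm_sym.
Qed.

Lemma quad_MP (R : realType) n (L X : 'M[R]_n) (u : 'cV[R]_n) :
  (0 < n)%N -> L^T = L -> (forall i, \sum_j L i j = 0) ->
  L + Jm R n \in unitmx -> L *m X *m L = L -> Jm R n *m u = 0 ->
  u^T *m X *m u = u^T *m X0 L *m u.
Proof.
move=> n0 sym rs U LXL Ju; have [h1 h2 h3 h4 h5] := X0_facts n0 sym rs U.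
have eu : u = L *m (X0 L *m u) by rewrite mulmxA h1 mulmxBl mul1mx Ju subr0.
have eut : u^T = u^T *m X0 L *m L.
  by rewrite {1}eu trmx_mul trmx_mul h5 sym.
rewrite {1}eut {2}eu.
rewrite !mulmxA -(mulmxA (u^T *m X0 L) L X) -(mulmxA (u^T *m X0 L) (L *m X) L) LXL.
rewrite -(mulmxA (u^T *m X0 L) L (X0 L)) h1 -mulmxA mulmxBl mul1mx Ju subr0 //.
Qed.

Lemma eig_le (R : realType) n (A : 'M[R]_n) c a :
  (forall i j, A i j = A j i) -> (forall i j, 0 <= A i j) ->
  (forall i, \sum_j A i j = c) -> eigenvalue A a -> `|a| <= c.
Proof.
move=> sym pos rs /eigenvalueP [v Hv vn0].
have [l vl] : exists l, v 0 l != 0.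
  apply/existsP; move: vn0; apply: contraR; rewrite negb_exists => /forallP H.
  by apply/eqP/matrixP => i j; rewrite (ord1 i) mxE; apply/eqP; move: (H j); rewrite negbK.
have [k Hk] := exists_max (fun l => `|v 0 l|) l.
have vk : 0 < `|v 0 k| by apply: lt_le_trans (Hk l); rewrite normr_gt0.
rewrite -(ler_pM2r vk) -normrM.
have -> : a * v 0 k = (v *m A) 0 k by rewrite Hv mxE.
rewrite mxE (le_trans (ler_norm_sum _ _ _)) //.
rewrite -(rs k) mulrC big_distrr /=; apply: ler_sum => j _.
rewrite normrM (ger0_norm (pos j k)) sym; apply: ler_wpM2r => //; exact: Hk.
Qed.

Lemma spec_rad (R : realType) n (A : 'M[R]_n) c :
  (0 < n)%N -> (forall i j, A i j = A j i) -> (forall i j, 0 <= A i j) ->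
  (forall i, \sum_j A i j = c) -> spectral_radius A = c.
Proof.
move=> n0 sym pos rs.
have c0 : 0 <= c by rewrite -(rs (Ordinal n0)); apply: sumr_ge0.
have eigc : eigenvalue A c.
  apply/eigenvalueP; exists (const_mx 1).
    apply/matrixP => i k; rewrite !mxE -(rs k) mulr1.
    by apply: eq_bigr => j _; rewrite mxE mul1r sym.
  apply/negP => /eqP /matrixP /(_ 0 (Ordinal n0)); rewrite !mxE => /eqP.
  by rewrite oner_eq0.
have Sc : [set `|a| | a in [set a : R | eigenvalue A a]] c.
  by exists c => //; rewrite ger0_norm.
have ub : ubound [set `|a| | a in [set a : R | eigenvalue A a]] c.
  by move=> y [a Ha <-]; apply: eig_le Ha.
rewrite /spectral_radius; apply/eqP; rewrite eq_le; apply/andP; split.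
  by apply: ge_sup => //; exists c.
by apply: ub_le_sup => //; exists c.
Qed.

Lemma cvg_sumL (R : realType) (T I : Type) (F : set_system T) (FF : Filter F)
  (r : seq I) (P : pred I) (f : I -> T -> R) (g : I -> R) :
  (forall i, f i @ F --> g i) ->
  (fun x => \sum_(i <- r | P i) f i x) @ F --> \sum_(i <- r | P i) g i.
Proof.
move=> H; elim: r => [|i r IH].
  rewrite big_nil; under eq_cvg do rewrite big_nil; exact: cvg_cst.
rewrite big_cons; under eq_cvg do rewrite big_cons.
case: (P i) => //; exact: cvgD.
Qed.

Lemma cvg_prodL (R : realType) (T I : Type) (F : set_system T) (FF : Filter F)
  (r : seq I) (P : pred I) (f : I -> T -> R) (g : I -> R) :
  (forall i, f i @ F --> g i) ->
  (fun x => \prod_(i <- r | P i) f i x) @ F --> \prod_(i <- r | P i) g i.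
Proof.
move=> H; elim: r => [|i r IH].
  rewrite big_nil; under eq_cvg do rewrite big_nil; exact: cvg_cst.
rewrite big_cons; under eq_cvg do rewrite big_cons.
case: (P i) => //; exact: cvgM.
Qed.

Lemma cvg_det (R : realType) (T : Type) (F : set_system T) (FF : Filter F) n
  (M : T -> 'M[R]_n) (G : 'M[R]_n) :
  (forall i j, (fun x => M x i j) @ F --> G i j) ->
  (fun x => \det (M x)) @ F --> \det G.
Proof.
move=> H; rewrite /determinant.
apply: cvg_sumL => s; apply: cvgM; first exact: cvg_cst.
by apply: cvg_prodL => i; apply: H.
Qed.

Lemma cvg_invmx (R : realType) (T : Type) (F : set_system T) (FF : Filter F) n
  (M : T -> 'M[R]_n) (G : 'M[R]_n) :
  (forall i j, (fun x => M x i j) @ F --> G i j) -> G \in unitmx ->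
  forall i j, (fun x => invmx (M x) i j) @ F --> invmx G i j.
Proof.
move=> H U i j.
have hd := cvg_det FF H.
have d0 : \det G != 0 by rewrite -unitfE -unitmxE.
have hadj : (fun x => \adj (M x) i j) @ F --> \adj G i j.
  rewrite mxE; under eq_cvg do rewrite mxE.
  apply: cvgM; first exact: cvg_cst.
  by apply: cvg_det => a b; rewrite !mxE; under eq_cvg do rewrite !mxE; apply: H.
have ev := cvgr_neq0 _ hd d0.
apply: cvg_trans (_ : (fun x => (\det (M x))^-1 * \adj (M x) i j) @ F --> _).
  apply: near_eq_cvg; near=> x.
  have dx : \det (M x) != 0 by near: x; exact: ev.
  by rewrite /invmx unitmxE unitfE dx [RHS]mxE.
rewrite /invmx U [X in _ --> X]mxE; apply: cvgM => //; exact: cvgV.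
Unshelve. all: by end_near.
Qed.

Lemma inv_uniq (R : realType) n (B X : 'M[R]_n) : B *m X = 1%:M -> invmx B = X.
Proof.
move=> h; have [UB _] := mulmx1_unit h.
by rewrite -[invmx B]mulmx1 -h mulmxA mulVmx // mul1mx.
Qed.

Lemma r_formula (R : realType) n (L : 'M[R]_n) c t :
  (0 < n)%N -> L^T = L -> (forall i, \sum_j L i j = 0) ->
  1 - t * c != 0 ->
  t *: L + (1 - t * c) *: (1%:M - Jm R n) + Jm R n \in unitmx ->
  invmx (1%:M - t *: (c%:M - L)) =
  ((1 - t * c)^-1 - 1) *: Jm R n + invmx (t *: L + (1 - t * c) *: (1%:M - Jm R n) + Jm R n).
Proof.
move=> n0 sym rs s0 U.
set s := 1 - t * c in s0 U *.
set J := Jm R n; set M := t *: L + s *: (1%:M - J) + J; set W := invmx M.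
have hLJ : L *m J = 0 by exact: LJ0.
have hJL : J *m L = 0 by exact: JL0.
have hJJ : J *m J = J by exact: JJ.
have MJ : M *m J = J.
  rewrite /M !mulmxDl hJJ -scalemxAl hLJ -scalemxAl mulmxBl mul1mx hJJ subrr.
  by rewrite !scaler0 !add0r.
have JM : J *m M = J.
  rewrite /M !mulmxDr hJJ -scalemxAr hJL -scalemxAr mulmxBr mulmx1 hJJ subrr.
  by rewrite !scaler0 !add0r.
have JW : J *m W = J by rewrite -{1}JM -mulmxA mulmxV // mulmx1.
have MW : M *m W = 1%:M by rewrite mulmxV.
have EB : 1%:M - t *: (c%:M - L) = M - (1 - s) *: J.
  apply/matrixP => a b; rewrite /M /s !mxE; ring.
apply: inv_uniq.
rewrite EB mulmxDr !mulmxBl -(scalemxAr _ M J) -(scalemxAl (1 - s) J) -(scalemxAl (1 - s) J W) -(scalemxAr _ J J) MJ MW JW hJJ.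
apply/matrixP => a b; rewrite !mxE.
move: (n%:R^-1 * 1) ((a == b)%:R) => z d; by field.
Qed.

Lemma inv_cvg0 (R : realType) : (fun x : R => x^-1) @ +oo --> 0.
Proof.
apply/cvgrPdist_lt => e e0.
near=> x.
have xe : e^-1 < x by near: x; apply: nbhs_pinfty_gt; rewrite realE invr_ge0 ltW.
have x0 : 0 < x by apply: lt_trans xe; rewrite invr_gt0.
rewrite sub0r normrN gtr0_norm ?invr_gt0 //.
by rewrite -(ltf_pV2 _ _) ?invrK // posrE ?invr_gt0.
Unshelve. all: by end_near.
Qed.

Lemma lninv_cvg0 (R : realType) : (fun x : R => (ln x)^-1) @ +oo --> 0.
Proof.
apply/cvgrPdist_lt => e e0.
near=> x.
have xe : expR (e^-1) < x by near: x; apply: nbhs_pinfty_gt; rewrite realE expR_ge0.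
have x0 : 0 < x by apply: lt_trans xe; rewrite expR_gt0.
have lx : e^-1 < ln x by rewrite -ltr_expR lnK.
have lx0 : 0 < ln x by apply: lt_trans lx; rewrite invr_gt0.
rewrite sub0r normrN gtr0_norm ?invr_gt0 //.
by rewrite -(ltf_pV2 _ _) ?invrK // posrE ?invr_gt0.
Unshelve. all: by end_near.
Qed.

Lemma ratio_cvg (R : realType) (p : R) : 0 < p ->
  (fun x => ln (expR 1 + x `^ p) / ln x) @ +oo --> p.
Proof.
move=> p0.
have hcv : (fun x => p + ln (expR 1 + 1) * (ln x)^-1) @ +oo --> p.
  rewrite -[X in _ --> X]addr0; apply: cvgD; first exact: cvg_cst.
  rewrite -(mulr0 (ln (expR 1 + 1 : R))); apply: cvgMl_tmp; exact: lninv_cvg0.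
apply: (squeeze_cvgr _ (cvg_cst p) hcv).
near=> x.
have x1 : 1 < x by near: x; apply: nbhs_pinfty_gt; rewrite realE ler01.
have x0 : 0 < x by apply: lt_trans x1.
have lx : 0 < ln x by apply: ln_gt0.
have xp0 : 0 < x `^ p by apply: powR_gt0.
have e0 : 0 < expR 1 :> R by apply: expR_gt0.
have lxp : ln (x `^ p) = p * ln x by rewrite ln_powR.
have xp1 : 1 <= x `^ p.
  by rewrite -(ler_ln (x:=1)) ?posrE // ln1 lxp mulr_ge0 // ltW.
apply/andP; split.
  rewrite ler_pdivlMr // -lxp ler_ln ?posrE ?addr_gt0 //.
  by rewrite lerDr ltW.
rewrite ler_pdivrMr // mulrDl -mulrA mulVf ?gt_eqF // mulr1 -lxp addrC.
rewrite -lnM ?posrE ?addr_gt0 // ler_ln ?posrE ?mulr_gt0 ?addr_gt0 //.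
rewrite mulrDr mulr1 addrC lerD2r mulrC.
by rewrite -{1}[expR 1]mulr1 ler_wpM2l // ltW.
Unshelve. all: by end_near.
Qed.

Lemma phi_cvg (R : realType) (k : R) (w : R -> R) (w0 : R) : 0 < k ->
  w @ +oo --> w0 ->
  (fun x => k * x * (ln (k * x + w x) - ln (k * x))) @ +oo --> w0.
Proof.
move=> k0 hw.
have hy : (fun x => w x * (k^-1 * x^-1)) @ +oo --> 0.
  rewrite -(mulr0 w0) -(mulr0 k^-1); apply: cvgM => //.
  by apply: cvgMl_tmp; exact: inv_cvg0.
have hg : (fun x => w x / (1 + w x * (k^-1 * x^-1))) @ +oo --> w0.
  rewrite -[X in _ --> X](divr1 w0); apply: cvgM => //.
  apply: cvgV; first by rewrite oner_neq0.
  rewrite -[X in _ --> X]addr0; apply: cvgD => //; exact: cvg_cst.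
apply: (squeeze_cvgr _ hg hw).
near=> x.
have x0 : 0 < x by near: x; apply: nbhs_pinfty_gt; rewrite realE lexx.
have yb : - 2^-1 < w x * (k^-1 * x^-1) by near: x; apply: (cvgr_gt 0 hy); lra.
set y := w x * (k^-1 * x^-1) in yb *.
have K0 : 0 < k * x by apply: mulr_gt0.
have kn : k != 0 by rewrite gt_eqF.
have xn : x != 0 by rewrite gt_eqF.
have wy : w x = k * x * y by rewrite /y; field; rewrite xn kn.
have y1 : 0 < 1 + y by lra.
have e1 : ln (k * x + w x) - ln (k * x) = ln (1 + y).
  rewrite wy -{1}(mulr1 (k * x)) -mulrDr lnM ?posrE //; ring.
rewrite e1; apply/andP; split; last first.
  by rewrite wy ler_pM2l // le_ln1Dx //; lra.
have hl : y / (1 + y) <= ln (1 + y).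
  have h := @le_ln1Dx R ((1 + y)^-1 - 1).
  have ee : 1 + ((1 + y)^-1 - 1) = (1 + y)^-1 by ring.
  rewrite ee lnV ?posrE // in h.
  have ip : 0 < (1 + y)^-1 by rewrite invr_gt0.
  have : (-1 < (1 + y)^-1 - 1) by lra.
  move/h => h'.
  have -> : y / (1 + y) = 1 - (1 + y)^-1.
    by field; rewrite gt_eqF.
  lra.
by rewrite wy -mulrA ler_pM2l.
Unshelve. all: by end_near.
Qed.

Lemma near_cvg (R : realType) (T : Type) (F : set_system T) (FF : Filter F)
  (f g : T -> R) (l : R) :
  (\forall x \near F, f x = g x) -> g @ F --> l -> f @ F --> l.
Proof.
move=> H hg; apply: cvg_trans hg; apply: near_eq_cvg.
by apply: filterS H => x ->.
Qed.

Lemma theta_cvg (R : realType) (k p : R) : 0 < k -> 0 < p ->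
  (fun x => ln (expR 1 + x `^ p) * ((x - 1) / ln x) / (k * x)) @ +oo --> p / k.
Proof.
move=> k0 p0.
apply: (@near_cvg R R _ _ _ (fun x => k^-1 * (ln (expR 1 + x `^ p) / ln x) * (1 - x^-1))).
  near=> x.
  have x1 : 1 < x by near: x; apply: nbhs_pinfty_gt; rewrite realE ler01.
  have lx : ln x != 0 by rewrite gt_eqF // ln_gt0.
  have xn : x != 0 by rewrite gt_eqF // (lt_trans _ x1).
  have kn : k != 0 by rewrite gt_eqF.
  by field; rewrite xn kn lx.
have -> : p / k = k^-1 * p * (1 - 0) by rewrite subr0 mulr1 mulrC.
apply: cvgM; first by apply: cvgMl_tmp; exact: ratio_cvg.
apply: cvgB; first exact: cvg_cst.
exact: inv_cvg0.
Unshelve. all: by end_near.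
Qed.

Lemma sum_delta (R : realType) n (i : 'I_n) (x : R) :
  \sum_(j : 'I_n) x *+ (i == j) = x.
Proof.
rewrite (bigD1 i) //= eqxx mulr1n big1 ?addr0 // => j ji.
by rewrite eq_sym (negbTE ji) mulr0n.
Qed.

Lemma lap_rowsum0 (R : realType) n (a : 'M[R]_n) i :
  \sum_j laplacian a i j = 0.
Proof.
rewrite (eq_bigr (fun j => (\sum_k a i k) *+ (i == j) - a i j)).
  by rewrite sumrB sum_delta subrr.
by move=> j _; rewrite !mxE.
Qed.

Lemma lap_sym (R : realType) n (a : 'M[R]_n) :
  (forall i j, a i j = a j i) -> (laplacian a)^T = laplacian a.
Proof.
move=> sym; apply/matrixP => i j; rewrite !mxE sym eq_sym.
by case: (eqVneq j i) => [->|]; rewrite ?mulr0n.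
Qed.

Lemma lap_scalar (R : realType) n (a : 'M[R]_n) c :
  (forall i, \sum_j a i j = c) -> laplacian a = c%:M - a.
Proof. by move=> rs; apply/matrixP => i j; rewrite !mxE rs. Qed.

Lemma quad_entry (R : realType) n (X : 'M[R]_n) i j :
  ((basis_vec R i - basis_vec R j)^T *m X *m (basis_vec R i - basis_vec R j)) 0 0
  = X i i - X i j - X j i + X j j.
Proof.
have e : forall a b, ((basis_vec R a)^T *m X *m basis_vec R b) 0 0 = X a b.
  move=> a b; rewrite /basis_vec trmx_delta -rowE -colE !mxE.
  by [].
have E2 : forall (A B : 'M[R]_1), (A - B) 0 0 = A 0 0 - B 0 0 by move=> A B; rewrite !mxE.
have tB : (basis_vec R i - basis_vec R j)^T = (basis_vec R i)^T - (basis_vec R j)^T by rewrite linearB.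
rewrite tB !mulmxBl !mulmxBr !E2 !e.
ring.
Qed.

Lemma J_u (R : realType) n (i j : 'I_n) :
  Jm R n *m (basis_vec R i - basis_vec R j) = 0.
Proof.
rewrite mulmxBr /basis_vec -!colE.
by apply/eqP; rewrite subr_eq0; apply/eqP/matrixP => a b; rewrite !mxE.
Qed.

Lemma cvg_lin (R : realType) (T : Type) (F : set_system T) (FF : Filter F) n
  (t s : T -> R) (t0 s0 : R) (L P J : 'M[R]_n) a b :
  t @ F --> t0 -> s @ F --> s0 ->
  (fun x => (t x *: L + s x *: P + J) a b) @ F --> (t0 *: L + s0 *: P + J) a b.
Proof.
move=> ht hs.
have E : forall u v, (u *: L + v *: P + J) a b = u * L a b + v * P a b + J a b.
  by move=> u v; rewrite !mxE.
rewrite E; under eq_cvg do rewrite E.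
apply: cvgD; last exact: cvg_cst.
by apply: cvgD; apply: cvgMr_tmp.
Qed.

Unset Implicit Arguments.

Theorem corollary7 (R : realType) (n : nat) (E Et : seq (edge R n)) :
  (2 <= n)%N ->
  pos_weights E ->
  connected_graph E ->
  is_balance_graph E Et ->
  forall i j : 'I_n, long_walk_dist_is Et i j (resistance_dist E i j).
Proof.
move=> n2 pwE conn [loops [pl EtE [c rsc]]] i j.
have n0 : (0 < n)%N by apply: leq_trans n2.
have pwEt : pos_weights Et.
  move=> e; rewrite EtE mem_cat => /orP [/pwE //|/mapP [l lin ->]]; exact: pl.
set A := adjmx Et in rsc *.
have Asym : forall a b, A a b = A b a by move=> a b; exact: adj_sym.
have Apos : forall a b, 0 <= A a b by move=> a b; exact: adj_ge0.
set L := laplacian (adjmx E).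
have LA : L = laplacian A.
  by rewrite /A EtE adj_cat lap_diag // => a b; exact: adj_loops.
have Lc : L = c%:M - A by rewrite LA (lap_scalar rsc).
have Lsym : L^T = L by rewrite lap_sym // => a b; exact: adj_sym.
have Lrs : forall a, \sum_b L a b = 0 by move=> a; exact: lap_rowsum0.
have Lker : forall v : 'rV_n, v *m L = 0 -> forall a b, v 0 a = v 0 b.
  by move=> v; exact: lap_ker.
have U : L + Jm R n \in unitmx by exact: unit_LJ.
have c0 : 0 < c.
  have cge : 0 <= c by rewrite -(rsc i); apply: sumr_ge0.
  rewrite lt_neqAle cge andbT; apply/negP => /eqP c0'.
  have A0 : A = 0.
    apply/matrixP => a b; rewrite [RHS]mxE.
    have := rsc a; rewrite -c0' => /eqP; rewrite psumr_eq0 // => /allP.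
    by move=> /(_ b (mem_index_enum b)) /eqP.
  have L0 : L = 0.
    by apply/matrixP => a b; rewrite Lc A0 -c0' !mxE mul0rn subr0.
  move: U; rewrite L0 add0r => UJ.
  have J1 : Jm R n = 1%:M.
    by rewrite -[Jm R n]mul1mx -(mulVmx UJ) -mulmxA JJ // mulVmx.
  have := congr1 (fun M : 'M[R]_n => M (Ordinal n0) (Ordinal n2)) J1.
  rewrite !mxE /= mulr1 mulr0n => /eqP; rewrite invr_eq0 pnatr_eq0.
  by move/eqP => n00; rewrite n00 in n0.
have Res : resistance_dist E i j = X0 L i i - X0 L i j - X0 L j i + X0 L j j.
  rewrite /resistance_dist /= -/L.
  have mp : is_MP_inverse L (MPinv L).
    rewrite /MPinv; apply: (epsilon_spec (inhabits 0) (is_MP_inverse L)).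
    by exists (X0 L); exact: X0_MP.
  case: mp => LXL _ _ _.
  by rewrite (quad_MP n0 Lsym Lrs U LXL (J_u R i j)) quad_entry.
have [_ _ _ _ X0s] := X0_facts n0 Lsym Lrs U.
have X0ji : X0 L j i = X0 L i j by rewrite -{1}X0s mxE.
have SR : spectral_radius A = c by exact: spec_rad.
have [h1 _ h3 _ _] := X0_facts n0 Lsym Lrs U.
pose M0 := c^-1 *: L + (1 - c^-1 * c) *: (1%:M - Jm R n) + Jm R n.
have W0E : M0 *m (c *: X0 L + Jm R n) = 1%:M.
  rewrite /M0 mulVf ?gt_eqF // subrr scale0r addr0 mulmxDl !mulmxDr.
  rewrite -(scalemxAl c^-1 L (c *: X0 L)) -(scalemxAl c^-1 L (Jm R n)).
  rewrite -(scalemxAr c (Jm R n) (X0 L)) -(scalemxAr c L (X0 L)) h1 h3 (LJ0 Lrs) (JJ R n0).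
  by rewrite scaler0 scalerA mulVf ?gt_eqF // scale1r scaler0 addr0 add0r subrK.
have M0U : M0 \in unitmx by case: (mulmx1_unit W0E).
have invM0 : invmx M0 = c *: X0 L + Jm R n by apply: inv_uniq.
pose tt := fun x : R => (c + x^-1)^-1.
pose M := fun x : R => tt x *: L + (1 - tt x * c) *: (1%:M - Jm R n) + Jm R n.
have htt : tt @ +oo --> c^-1.
  have h : (fun x : R => c + x^-1) @ +oo --> c + 0 by apply: cvgD; [exact: cvg_cst|exact: inv_cvg0].
  rewrite addr0 in h; exact: (cvgV (negbT (gt_eqF c0)) h).
have hs : (fun x => 1 - tt x * c) @ +oo --> 1 - c^-1 * c.
  by apply: cvgB; [exact: cvg_cst| exact: cvgMr_tmp].
have hM : forall a b, (fun x => M x a b) @ +oo --> M0 a b.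
  by move=> a b; exact: cvg_lin.
have hW : forall a b, (fun x => invmx (M x) a b) @ +oo --> (c *: X0 L + Jm R n) a b.
  by move=> a b; rewrite -invM0; apply: cvg_invmx.
have d0 : \det M0 != 0 by rewrite -unitfE -unitmxE.
have hdet := cvgr_neq0 _ (cvg_det _ hM) d0.
have n0R : n%:R != 0 :> R by rewrite pnatr_eq0 -lt0n.
pose k := c / n%:R.
have k0 : 0 < k by rewrite divr_gt0 // ltr0n.
pose p : R := 2 / n%:R.
have p0 : 0 < p by rewrite divr_gt0 // ltr0n.
pose phi := fun a b x => k * x * (ln (k * x + invmx (M x) a b) - ln (k * x)).
have AL : A = c%:M - L by rewrite Lc opprB addrC subrK.
rewrite /long_walk_dist_is -/A Res.
apply: (@near_cvg R R _ _ _ (fun x => (ln (expR 1 + x `^ p) * ((x - 1) / ln x) / (k * x)) *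
   (2^-1 * phi i i x + 2^-1 * phi j j x - phi i j x))).
  near=> x.
  have x0 : 0 < x by near: x; apply: nbhs_pinfty_gt; rewrite realE lexx.
  have dx : \det (M x) != 0 by near: x; exact: hdet.
  have Ux : M x \in unitmx by rewrite unitmxE unitfE.
  have xn : x != 0 by rewrite gt_eqF.
  have cx0 : 0 < c * x + 1 by rewrite addr_gt0 // mulr_gt0.
  have cxi : c + x^-1 != 0 by rewrite gt_eqF // addr_gt0 // invr_gt0.
  have sE : 1 - (c + x^-1)^-1 * c = (c * x + 1)^-1.
    by field; rewrite xn gt_eqF.
  have s0 : 1 - (c + x^-1)^-1 * c != 0 by rewrite sE invr_neq0 // gt_eqF.
  rewrite /long_walk_expr /= SR AL (r_formula n0 Lsym Lrs s0 Ux).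
  have rE : forall a b, ((((1 - (c + x^-1)^-1 * c)^-1 - 1) *: Jm R n + invmx (M x)) a b)
      = k * x + invmx (M x) a b.
    move=> a b; rewrite [LHS]mxE [X in X + _]mxE.
    have -> : Jm R n a b = n%:R^-1 by rewrite !mxE mulr1.
    by rewrite sE /k; congr (_ + _); field; rewrite n0R gt_eqF.
  rewrite !rE /phi /p.
  have kxn : k * x != 0 by rewrite gt_eqF // mulr_gt0.
  move: (ln (expR 1 + x `^ (2 / n%:R)) * ((x - 1) / ln x)) => th.
  move: (ln (k * x + invmx (M x) i i)) (ln (k * x + invmx (M x) j j)) (ln (k * x + invmx (M x) i j)) (ln (k * x)) => l1 l2 l3 l4.
  by field; rewrite xn gt_eqF.
have hphi : forall a b, phi a b @ +oo --> (c *: X0 L + Jm R n) a b.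
  by move=> a b; exact: (phi_cvg k0 (hW a b)).
suff -> : X0 L i i - X0 L i j - X0 L j i + X0 L j j = p / k *
   (2^-1 * (c *: X0 L + Jm R n) i i + 2^-1 * (c *: X0 L + Jm R n) j j -
    (c *: X0 L + Jm R n) i j).
  apply: cvgM; first exact: theta_cvg.
  apply: cvgB; last exact: hphi.
  by apply: cvgD; apply: cvgMl_tmp; exact: hphi.
have WE : forall a b, (c *: X0 L + Jm R n) a b = c * X0 L a b + n%:R^-1.
  move=> a b; rewrite [LHS]mxE [X in X + _]mxE.
  by have -> : Jm R n a b = n%:R^-1 by rewrite !mxE mulr1.
rewrite !WE X0ji /p /k.
move: (X0 L i i) (X0 L i j) (X0 L j j) => y1 y2 y3.
by field; rewrite n0R gt_eqF.
Unshelve. all: by end_near.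
Qed.
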